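(* Let $X$ be a geodesic metric space and let $\Gamma\subset X$ be a topological arc connecting two points $a,b\in X$. Then for every $\varepsilon>0$ there exists a biLipschitz curve contained in the $\varepsilon$-neighborhood of $\Gamma$ and connecting $a$ and $b$.
   Context: A topological arc is a subset homeomorphic to a closed interval. A curve $\gamma\colon[s,t]\to X$ is biLipschitz if there is $K\ge1$ with $K^{-1}|r-r'|\le d(\gamma(r),\gamma(r'))\le K|r-r'|$ for all $r,r'$. *)

(* Defs.v *)
From Stdlib Require Import Reals Lra.
Open Scope R_scope.

Definition is_metric {X : Type} (d : X -> X -> R) : Prop :=
  (forall x y, 0 <= d x y) /\
  (forall x y, d x y = 0 <-> x = y) /\
  (forall x y, d x y = d y x) /\
  (forall x y z, d x z <= d x y + d y z).

Definition geodesic_space {X : Type} (d : X -> X -> R) : Prop :=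
  forall x y : X, exists g : R -> X,
    g 0 = x /\ g (d x y) = y /\
    forall r r', 0 <= r <= d x y -> 0 <= r' <= d x y ->
      d (g r) (g r') = Rabs (r - r').

Definition is_arc {X : Type} (d : X -> X -> R) (Gamma : X -> Prop) (a b : X) : Prop :=
  exists f : R -> X,
    (forall p, 0 <= p <= 1 -> Gamma (f p)) /\
    (forall x, Gamma x -> exists p, 0 <= p <= 1 /\ f p = x) /\
    (forall p q, 0 <= p <= 1 -> 0 <= q <= 1 -> f p = f q -> p = q) /\
    (forall p, 0 <= p <= 1 -> forall e, 0 < e -> exists del, 0 < del /\
       forall q, 0 <= q <= 1 -> Rabs (p - q) < del -> d (f p) (f q) < e) /\
    (forall p, 0 <= p <= 1 -> forall e, 0 < e -> exists del, 0 < del /\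
       forall q, 0 <= q <= 1 -> d (f p) (f q) < del -> Rabs (p - q) < e) /\
    f 0 = a /\ f 1 = b.

Definition biLipschitz_on {X : Type} (d : X -> X -> R) (g : R -> X) (s t : R) : Prop :=
  exists K, 1 <= K /\
    forall r r', s <= r <= t -> s <= r' <= t ->
      / K * Rabs (r - r') <= d (g r) (g r') /\ d (g r) (g r') <= K * Rabs (r - r').

Definition eps_nbhd {X : Type} (d : X -> X -> R) (Gamma : X -> Prop) (eps : R) (x : X) : Prop :=
  exists p, Gamma p /\ d x p < eps.

(* Main.v *)
Require Import Defs.
From Stdlib Require Import Reals Lra Classical.
Open Scope R_scope.

Lemma lip_cont (F : R -> R) (K : R) : 0 < K ->
  (forall x y, Rabs (F x - F y) <= K * Rabs (x - y)) -> forall x, continuity_pt F x.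
Proof.
  intros HK HF x e He. exists (e / K). split.
  - apply Rdiv_lt_0_compat; lra.
  - intros y [_ Hy]. simpl in *. unfold R_dist in *.
    eapply Rle_lt_trans. apply HF.
    apply Rmult_lt_reg_l with (/ K). apply Rinv_0_lt_compat; lra.
    rewrite <- Rmult_assoc, Rinv_l by lra. unfold Rdiv in Hy. lra.
Qed.

Lemma rmin_lip a b D : Rabs (Rmin a D - Rmin b D) <= Rabs (a - b).
Proof.
  unfold Rmin; destruct (Rle_dec a D); destruct (Rle_dec b D);
  unfold Rabs; repeat destruct Rcase_abs; lra.
Qed.

Definition good {X : Type} (d : X -> X -> R) (Gamma : X -> Prop) (eps del : R) (a : X)
  (n : nat) (S : R) (P : R -> X) (x : X) : Prop :=
  0 <= S /\ S <= INR n * del /\ P 0 = a /\ P S = x /\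
  (forall r r', d (P r) (P r') <= Rabs (r - r')) /\
  (forall r r', 0 <= r <= S -> 0 <= r' <= S -> Rabs (r - r') <= (INR n + 1) * d (P r) (P r')) /\
  (forall r, 0 <= r <= S -> eps_nbhd d Gamma eps (P r)).

Lemma extend {X : Type} (d : X -> X -> R) (Gamma : X -> Prop) (eps del : R) (a : X)
  (Hd : is_metric d) (Hgeo : geodesic_space d) (Hdel : 0 < del) (He : 2 * del <= eps)
  n S P x z : good d Gamma eps del a n S P x -> d x z < del -> Gamma z ->
  exists S' P', good d Gamma eps del a (Datatypes.S n) S' P' z.
Proof.
  destruct Hd as [Hpos [Hzero [Hsym Htri]]].
  intros [HS0 [HSn [HP0 [HPS [HL [HB HN]]]]]] Hxz Hz.
  assert (Hn : 0 <= INR n) by apply pos_INR.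
  set (c := / (INR n + 2)).
  assert (Hc : 0 < c) by (apply Rinv_0_lt_compat; lra).
  assert (Hcn : c * (INR n + 2) = 1) by (unfold c; field; lra).
  set (F := fun t => d (P t) z + c * t).
  destruct (continuity_ab_min F 0 S HS0) as [ts [Hmin Hts]].
  { intros t _. apply (lip_cont F (1 + c)). lra.
    intros u v. unfold F.
    assert (A1 := Htri (P u) (P v) z). assert (A2 := Htri (P v) (P u) z).
    assert (A3 := HL u v). rewrite (Hsym (P v) (P u)) in A2.
    assert (Rabs (c * u - c * v) = c * Rabs (u - v)).
    { rewrite <- Rmult_minus_distr_l, Rabs_mult, Rabs_pos_eq; lra. }
    eapply Rle_trans. 
    replace (d (P u) z + c * u - (d (P v) z + c * v)) with
      ((d (P u) z - d (P v) z) + (c * u - c * v)) by ring.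
    apply Rabs_triang.
    assert (Rabs (d (P u) z - d (P v) z) <= Rabs (u - v)).
    { apply Rabs_le; lra. }
    lra. }
  destruct (Hgeo (P ts) z) as [G [G0 [GD Giso]]].
  set (D := d (P ts) z) in *.
  assert (HD0 : 0 <= D) by apply Hpos.
  assert (HDdef : D = d (P ts) z) by reflexivity. clearbody D.
  assert (HDm : D + c * ts <= d x z + c * S).
  { assert (H := Hmin S ltac:(lra)). unfold F in H. rewrite HPS, <- HDdef in H. exact H. }
  set (P' := fun r => if Rle_dec r ts then P r else G (Rmin (r - ts) D)).
  exists (ts + D), P'.
  assert (HcS : c * S <= c * (INR n * del)) by (apply Rmult_le_compat_l; lra).
  assert (HcS2 : c * (INR n * del) < del).
  { replace (c * (INR n * del)) with (del * (c * INR n)) by ring.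
    rewrite <- (Rmult_1_r del) at 2. apply Rmult_lt_compat_l; lra. }
  assert (HcSt : c * (S - ts) <= S - ts).
  { assert (c <= 1).
    { unfold c. rewrite <- Rinv_1. apply Rinv_le_contravar; lra. }
    assert (0 <= S - ts) by lra.
    assert (0 <= (1 - c) * (S - ts)) by (apply Rmult_le_pos; lra). lra. }
  assert (0 <= c * ts) by (apply Rmult_le_pos; lra).
  assert (HDlt : D < 2 * del) by lra.
  assert (Giso' : forall v, 0 <= v <= D -> d (G v) z = D - v).
  { intros v Hv. rewrite <- GD. rewrite Giso by lra.
    rewrite Rabs_left1; lra. }
  split; [lra|]. split.
  { rewrite S_INR. lra. }
  split.
  { unfold P'. destruct (Rle_dec 0 ts); [exact HP0 | lra]. }
  split.
  { unfold P'. destruct (Rle_dec (ts + D) ts).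
    - assert (D = 0) by lra. assert (P ts = z) by (apply Hzero; rewrite <- HDdef; lra).
      replace (ts + D) with ts by lra. assumption.
    - rewrite Rmin_left by lra. replace (ts + D - ts) with D by ring. exact GD. }
  split.
  {
    assert (mixed : forall r r', r <= ts -> ~ r' <= ts ->
              d (P r) (G (Rmin (r' - ts) D)) <= Rabs (r - r')).
    { intros r r' Hr Hr'.
      assert (0 <= Rmin (r' - ts) D <= D).
      { unfold Rmin; destruct Rle_dec; lra. }
      assert (Rmin (r' - ts) D <= r' - ts) by apply Rmin_l.
      eapply Rle_trans. apply (Htri _ (P ts)).
      rewrite <- G0 at 2. rewrite Giso by lra. 
      assert (HL1 := HL r ts).
      rewrite (Rabs_left1 (r - ts)) in HL1 by lra.
      rewrite (Rabs_left1 (0 - _)) by lra.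
      rewrite (Rabs_left1 (r - r')) by lra. lra. }
    intros r r'. unfold P'.
    destruct (Rle_dec r ts); destruct (Rle_dec r' ts).
    - apply HL.
    - apply mixed; assumption.
    - rewrite Hsym, Rabs_minus_sym. apply mixed; assumption.
    - assert (0 <= Rmin (r - ts) D <= D) by (unfold Rmin; destruct Rle_dec; lra).
      assert (0 <= Rmin (r' - ts) D <= D) by (unfold Rmin; destruct Rle_dec; lra).
      rewrite Giso by lra.
      eapply Rle_trans. apply rmin_lip. 
      replace (r - ts - (r' - ts)) with (r - r') by ring. lra. }
  split.
  {
    rewrite S_INR.
    assert (mixed : forall r r', 0 <= r <= ts -> ts < r' <= ts + D ->
              Rabs (r - r') <= (INR n + 1 + 1) * d (P r) (G (r' - ts))).
    { intros r r' Hr Hr'.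
      assert (H1 := Hmin r ltac:(lra)). unfold F in H1. rewrite <- HDdef in H1.
      assert (H2 := Htri (P r) (G (r' - ts)) z).
      rewrite Giso' in H2 by lra.
      rewrite Rabs_left1 by lra.
      assert (H3 : c * (ts - r) + (r' - ts) <= d (P r) (G (r' - ts))) by lra.
      assert (H4 : (INR n + 2) * (c * (ts - r) + (r' - ts)) >= ts - r + (r' - ts)).
      { rewrite Rmult_plus_distr_l, <- Rmult_assoc, (Rmult_comm _ c), Hcn. nra. }
      replace (INR n + 1 + 1) with (INR n + 2) by ring.
      assert (0 <= INR n + 2) by lra. nra. }
    intros r r' Hr Hr'. unfold P'.
    destruct (Rle_dec r ts); destruct (Rle_dec r' ts).
    - assert (HBr := HB r r' ltac:(lra) ltac:(lra)).
      assert (0 <= d (P r) (P r')) by apply Hpos. assert (0 <= d (P r) (P r')) by apply Hpos. lra.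
    - rewrite Rmin_left by lra. apply mixed; lra.
    - rewrite Rmin_left by lra. rewrite Hsym, Rabs_minus_sym. apply mixed; lra.
    - rewrite !Rmin_left by lra. rewrite Giso by lra.
      replace (r - ts - (r' - ts)) with (r - r') by ring.
      assert (0 <= Rabs (r - r')) by apply Rabs_pos. nra. }
  { intros r Hr. unfold P'. destruct (Rle_dec r ts).
    - apply HN. lra.
    - exists z. split; [exact Hz|]. rewrite Rmin_left by lra.
      rewrite Giso' by lra. lra. }
Qed.

Theorem lemma4p3 (X : Type) (d : X -> X -> R)
  (Hd : is_metric d) (Hgeo : geodesic_space d)
  (Gamma : X -> Prop) (a b : X) (Harc : is_arc d Gamma a b)
  (eps : R) (Heps : 0 < eps) :
  exists (s t : R) (g : R -> X),
    s <= t /\ g s = a /\ g t = b /\ biLipschitz_on d g s t /\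
    (forall r, s <= r <= t -> eps_nbhd d Gamma eps (g r)).
Proof.
  destruct Harc as [f [Hin [_ [_ [Hcont [_ [Hf0 Hf1]]]]]]].
  set (del := eps / 2).
  assert (Hdel : 0 < del) by (unfold del; lra).
  assert (He : 2 * del <= eps) by (unfold del; lra).
  pose proof Hd as Hd'. destruct Hd' as [Hpos [Hzero [Hsym Htri]]].
  set (E := fun p => 0 <= p <= 1 /\ exists n S P, good d Gamma eps del a n S P (f p)).
  assert (E0 : E 0).
  { split; [lra|]. exists O, 0, (fun _ => a). unfold good. simpl.
    assert (Haa : d a a = 0) by (apply Hzero; reflexivity).
    split; [lra|]. split; [lra|]. split; [reflexivity|]. split; [auto|].
    split. { intros. rewrite Haa. apply Rabs_pos. }
    split. { intros r r' Hr Hr'. replace (r - r') with 0 by lra. rewrite Rabs_R0, Haa. lra. }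
    intros r _. exists a. split; [rewrite <- Hf0; apply Hin; lra | lra]. }
  assert (Hext : forall q q', E q -> 0 <= q' <= 1 -> d (f q) (f q') < del -> E q').
  { intros q q' [Hq [n [S [P HG]]]] Hq' Hdq.
    split; [exact Hq'|].
    destruct (extend d Gamma eps del a Hd Hgeo Hdel He n S P (f q) (f q') HG Hdq
                (Hin q' Hq')) as [S' [P' HG']].
    eauto. }
  destruct (completeness E) as [s [Hub Hlub]].
  { exists 1. intros p [Hp _]. lra. }
  { exists 0. exact E0. }
  assert (Hs0 : 0 <= s) by (apply Hub; exact E0).
  assert (Hs1 : s <= 1).
  { apply Hlub. intros p [Hp _]. lra. }
  destruct (Hcont s (conj Hs0 Hs1) del Hdel) as [eta [Heta Hq]].
  assert (Hex : exists q, E q /\ s - eta < q).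
  { apply NNPP. intro Hno.
    assert (s <= s - eta).
    { apply Hlub. intros p Hp. apply Rnot_lt_le. intro Hlt. apply Hno. exists p. auto. }
    lra. }
  destruct Hex as [q [Eq Hqs]].
  assert (Hqs' : q <= s) by (apply Hub; exact Eq).
  assert (Es : E s).
  { apply (Hext q s Eq (conj Hs0 Hs1)). rewrite Hsym. apply Hq.
    destruct Eq as [Hq01 _]. exact Hq01.
    rewrite Rabs_right; lra. }
  assert (E1 : E 1).
  { destruct (Rle_dec (s + eta / 2) 1).
    - assert (E (s + eta/2)).
      { apply (Hext s); [exact Es| lra |]. apply Hq; [lra|].
        rewrite Rabs_left; lra. }
      assert (s + eta / 2 <= s) by (apply Hub; assumption). lra.
    - apply (Hext s); [exact Es| lra |]. apply Hq; [lra|].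
      rewrite Rabs_left1; lra. }
  destruct E1 as [_ [n [S [P [HS0 [HSn [HP0 [HPS [HL [HB HN]]]]]]]]]].
  exists 0, S, P. split; [exact HS0|]. split; [exact HP0|].
  split; [rewrite HPS; exact Hf1|]. split; [|exact HN].
  assert (Hn : 0 <= INR n) by apply pos_INR.
  exists (INR n + 1). split; [lra|].
  intros r r' Hr Hr'. split.
  - assert (H := HB r r' Hr Hr').
    apply Rmult_le_reg_l with (INR n + 1); [lra|].
    rewrite <- Rmult_assoc, Rinv_r by lra. lra.
  - eapply Rle_trans; [apply HL|].
    assert (0 <= Rabs (r - r')) by apply Rabs_pos. nra.
Qed.
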